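(* Let $m>a\geq0$, $n>b\geq0$, $h\geq0$ be integers with $h\leq (m-a)(n-b)-\max\{m-a,n-b\}$, and let $N=mn$. For any $\mathcal{E}'\in\mathbb{E}^{\max}_{m\times n}(a,b,0)$ and any $[N,k]$ code $\mathcal{C}\in\mathbb{C}^{\mathsf{MR}}_{m\times n}(a,b,h)$, the code $\mathcal{C}|_{([m]\times[n])\setminus\mathcal{E}'}$ (obtained by restricting every codeword to the positions outside $\mathcal{E}'$) is an $[N-|\mathcal{E}'|,k,h+1]$ MDS code.
   Context: Positions of vectors in $\mathbb{F}^{mn}$ are identified with the grid $[m]\times[n]$, where $[k]=\{1,\dots,k\}$. For linear codes $\mathcal{C}_1\subseteq\mathbb{F}^m$, $\mathcal{C}_2\subseteq\mathbb{F}^n$ with generator matrices $\mathbf{G}_1,\mathbf{G}_2$, $\mathcal{C}_1\otimes\mathcal{C}_2$ is the row span of $\mathbf{G}_1\otimes\mathbf{G}_2$. A code for the topology $T_{m\times n}(a,b,h)$ is a linear code over a finite field $\mathbb{F}$ with a parity-check matrix $\begin{pmatrix}\mathbf{H}_{\mathsf{local}}\\ \mathbf{H}_{\mathsf{global}}\end{pmatrix}$, where $\mathbf{H}_{\mathsf{local}}$ is a parity-check matrix of $\mathcal{C}_{\mathsf{col}}\otimes\mathcal{C}_{\mathsf{row}}$ for some linear $[m,\geq m-a]$ code $\mathcal{C}_{\mathsf{col}}$ and $[n,\geq n-b]$ code $\mathcal{C}_{\mathsf{row}}$ over $\mathbb{F}$, and $\mathbf{H}_{\mathsf{global}}$ is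 an arbitrary $h\times mn$ matrix; $\mathbb{C}_{m\times n}(a,b,h)$ is the set of all such codes (over any finite field). A code corrects an erasure pattern $\mathcal{E}\subseteq[m]\times[n]$ if no two distinct codewords agree on all positions outside $\mathcal{E}$. $\mathcal{E}$ is correctable in $T_{m\times n}(a,b,h)$ if some code in $\mathbb{C}_{m\times n}(a,b,h)$ corrects it; $\mathbb{E}_{m\times n}(a,b,h)$ is the set of such patterns, $\mathbb{E}^{\max}_{m\times n}(a,b,h)$ the set of those not properly contained in another correctable pattern. A code in $\mathbb{C}_{m\times n}(a,b,h)$ is maximally recoverable (MR) if it corrects every pattern in $\mathbb{E}_{m\times n}(a,b,h)$; $\mathbb{C}^{\mathsf{MR}}_{m\times n}(a,b,h)$ is the set of MR codes. *)

(* Defs.v *)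
From HB Require Import structures.
From mathcomp Require Import all_boot all_order all_algebra.
Set Implicit Arguments. Unset Strict Implicit. Unset Printing Implicit Defensive.
Import GRing.Theory.
Local Open Scope ring_scope.

(* Words of length N = m*n are m x n matrices: position (i,j) of the grid
   [m] x [n] is the matrix entry (i,j).  Linear codes are subspaces. *)

Section Codes.
Variables (F : finFieldType) (m n : nat).

(* C1 (x) C2 : span of the rows of G1 (x) G2, i.e. of all u^T v with
   u, v ranging over bases (generator matrices) of C1, C2. *)
Definition tensor_code (C1 : {vspace 'rV[F]_m}) (C2 : {vspace 'rV[F]_n})
  : {vspace 'M[F]_(m, n)} :=
  <<[seq (u^T *m v) | u <- vbasis C1, v <- vbasis C2]>>%VS.

(* C is a code for the topology T_{m x n}(a,b,h): its parity-check matrix is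
   (H_local ; H_global), H_local a parity-check matrix of C_col (x) C_row. *)
Definition in_topology (a b h : nat) (C : {vspace 'M[F]_(m, n)}) : Prop :=
  exists (Ccol : {vspace 'rV[F]_m}) (Crow : {vspace 'rV[F]_n})
         (Hg : 'M[F]_(h, m * n)),
    [/\ (m - a <= \dim Ccol)%N, (n - b <= \dim Crow)%N &
        forall X : 'M[F]_(m, n),
          (X \in C) = (X \in tensor_code Ccol Crow) && (Hg *m (mxvec X)^T == 0)].

Definition corrects (C : {vspace 'M[F]_(m, n)}) (E : {set 'I_m * 'I_n}) : Prop :=
  forall X Y, X \in C -> Y \in C ->
    (forall i j, (i, j) \notin E -> X i j = Y i j) -> X = Y.

(* restriction to S: coordinates outside S are deleted (here: set to 0) *)
Definition mask (S : {set 'I_m * 'I_n}) (X : 'M[F]_(m, n)) : 'M[F]_(m, n) :=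
  \matrix_(i, j) if (i, j) \in S then X i j else 0.

Definition restr_code (S : {set 'I_m * 'I_n}) (C : {vspace 'M[F]_(m, n)})
  : {vspace 'M[F]_(m, n)} := <<map (mask S) (vbasis C)>>%VS.

Definition wt (X : 'M[F]_(m, n)) : nat := #|[set p : 'I_m * 'I_n | X p.1 p.2 != 0]|.

Definition min_dist (D : {vspace 'M[F]_(m, n)}) (d : nat) : Prop :=
  (exists2 X, X \in D & (X != 0) && (wt X == d)) /\
  (forall X, X \in D -> X != 0 -> (d <= wt X)%N).

End Codes.

Definition correctable (m n a b h : nat) (E : {set 'I_m * 'I_n}) : Prop :=
  exists (F : finFieldType) (C : {vspace 'M[F]_(m, n)}),
    in_topology a b h C /\ corrects C E.

Definition max_correctable (m n a b h : nat) (E : {set 'I_m * 'I_n}) : Prop :=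
  correctable a b h E /\
  forall E2 : {set 'I_m * 'I_n}, E \proper E2 -> ~ correctable a b h E2.

Definition is_MR (F : finFieldType) (m n a b h : nat) (C : {vspace 'M[F]_(m, n)}) : Prop :=
  in_topology a b h C /\
  forall E : {set 'I_m * 'I_n}, correctable a b h E -> corrects C E.

(* Main.v *)
Require Import Defs.
From HB Require Import structures.
From mathcomp Require Import all_boot all_order all_algebra.
From mathcomp Require Import ring zify.
Set Implicit Arguments. Unset Strict Implicit. Unset Printing Implicit Defensive.
Import GRing.Theory.
Local Open Scope ring_scope.

Section Aux.
Variables (F : finFieldType) (m n : nat).
Implicit Types (X Y Z : 'M[F]_(m, n)) (A E S : {set 'I_m * 'I_n}).

Lemma mask_is_linear A : linear (@Defs.mask F m n A).
Proof.
move=> c X Y; apply/matrixP => i j; rewrite !mxE.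
by case: ifP => _; rewrite ?mulr0 ?addr0.
Qed.

HB.instance Definition _ A := GRing.isLinear.Build F 'M[F]_(m, n) 'M[F]_(m, n) _
  (@Defs.mask F m n A) (mask_is_linear A).

Definition maskL A : 'Hom('M[F]_(m, n), 'M[F]_(m, n)) := linfun (@Defs.mask F m n A).

Lemma maskLE A X : maskL A X = Defs.mask A X.
Proof. by rewrite lfunE. Qed.

Lemma restrE A C : restr_code A C = (maskL A @: C)%VS.
Proof.
rewrite /restr_code -[in RHS](span_basis (vbasisP C)) limg_span.
by apply: congr1; apply: eq_map => x; rewrite maskLE.
Qed.

Lemma mask_id A X : Defs.mask A (Defs.mask A X) = Defs.mask A X.
Proof. apply/matrixP=> i j. rewrite /Defs.mask !mxE. case: ifP => h; rewrite ?h //. Qed.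

Definition DA A : {vspace 'M[F]_(m, n)} :=
  <<[seq delta_mx p.1 p.2 | p <- enum A]>>%VS.

Lemma dim_DA A : (\dim (DA A) <= #|A|)%N.
Proof. by rewrite /DA (leq_trans (dim_span _)) // size_map cardE. Qed.

Lemma mask_sum A X :
  Defs.mask A X = \sum_(p in A) X p.1 p.2 *: delta_mx p.1 p.2.
Proof.
apply/matrixP=> i j; rewrite summxE mxE.
case: ifP => iA.
  rewrite (bigD1 (i, j)) //= !mxE !eqxx mulr1 big1 ?addr0 // => p /andP [_ pij].
  rewrite !mxE; case: p pij => i' j' /= ne.
  have -> : (i == i') && (j == j') = false.
    by apply/negbTE; apply: contra ne => /andP[/eqP-> /eqP->].
  by rewrite mulr0.
rewrite big1 // => p pA; rewrite !mxE; case: p pA => i' j' /= pA.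
have -> : (i == i') && (j == j') = false.
  by apply/negbTE; apply/negP => /andP[/eqP ei /eqP ej]; move: pA; rewrite -ei -ej iA.
by rewrite mulr0.
Qed.

Lemma mask_in_DA A X : Defs.mask A X \in DA A.
Proof.
rewrite mask_sum; apply: rpred_sum => p pA.
apply: memvZ; rewrite /DA; apply: memv_span; apply: (map_f (fun p => delta_mx p.1 p.2)); by rewrite mem_enum.
Qed.

Lemma correctsP C E :
  corrects C E <->
  (forall Z, Z \in C -> (forall i j, (i, j) \notin E -> Z i j = 0) -> Z = 0).
Proof.
split=> [cC Z ZC Zv|H X Y XC YC XY].
  apply: cC => //; first exact: mem0v.
  by move=> i j ij; rewrite Zv // mxE.
apply/eqP; rewrite -subr_eq0; apply/eqP; apply: H; first by rewrite memvB.
by move=> i j ij; rewrite !mxE XY // subrr.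
Qed.

Lemma dim_full_split E :
  (m * n <= \dim (DA (~: E)) + #|E|)%N.
Proof.
have -> : (m * n)%N = \dim (fullv : {vspace 'M[F]_(m, n)}) by rewrite dimvf.
apply: leq_trans (leq_add (leqnn _) (dim_DA E)).
apply: leq_trans (dimv_add_leqif _ _).
apply: dimvS; apply/subvP => X _.
have -> : X = Defs.mask (~: E) X + Defs.mask E X.
  apply/matrixP => i j; rewrite /Defs.mask !mxE inE.
  by case: ((i, j) \in E) => /=; rewrite ?addr0 ?add0r.
by apply: memv_add; apply: mask_in_DA.
Qed.

Lemma card_all : #|[set: 'I_m * 'I_n]| = (m * n)%N.
Proof. by rewrite cardsT card_prod !card_ord. Qed.

Lemma cardC_E E : #|~: E| = (m * n - #|E|)%N.
Proof. by rewrite -card_all cardsT -(cardsC E) addKn. Qed.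

Lemma tensor_mem (C1 : {vspace 'rV[F]_m}) (C2 : {vspace 'rV[F]_n}) u v :
  u \in C1 -> v \in C2 -> u^T *m v \in tensor_code C1 C2.
Proof.
move=> /coord_vbasis -> /coord_vbasis ->.
rewrite linear_sum /=; apply: rpred_sum => j _.
rewrite linear_sum /= mulmx_suml; apply: rpred_sum => i _.
rewrite [_^T]linearZ /= -scalemxAl -!scalemxAr; apply: memvZ; apply: memvZ.
apply: memv_span; apply/allpairsP; exists ((vbasis C1)`_i, (vbasis C2)`_j) => /=.
by rewrite !mem_nth ?size_tuple.
Qed.

Lemma tensor_sub (C1 D1 : {vspace 'rV[F]_m}) (C2 D2 : {vspace 'rV[F]_n}) :
  (C1 <= D1)%VS -> (C2 <= D2)%VS -> (tensor_code C1 C2 <= tensor_code D1 D2)%VS.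
Proof.
move=> /subvP s1 /subvP s2; apply/span_subvP => x /allpairsP [[u v] /= [uC vC ->]].
by apply: tensor_mem; [apply: s1; apply: vbasis_mem | apply: s2; apply: vbasis_mem].
Qed.

Lemma tensor_dim_le (C1 : {vspace 'rV[F]_m}) (C2 : {vspace 'rV[F]_n}) :
  (\dim (tensor_code C1 C2) <= \dim C1 * \dim C2)%N.
Proof. by rewrite (leq_trans (dim_span _)) // size_allpairs !size_tuple. Qed.

Definition tmap d1 d2 (s1 : seq 'rV[F]_m) (s2 : seq 'rV[F]_n) (X : 'M[F]_(d1, d2))
  : 'M[F]_(m, n) := \sum_(i < d1) \sum_(j < d2) X i j *: ((s1`_i)^T *m s2`_j).

Lemma tmap_is_linear d1 d2 s1 s2 : linear (@tmap d1 d2 s1 s2).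
Proof.
move=> c X Y; rewrite /tmap scaler_sumr -big_split /=; apply: eq_bigr => i _.
rewrite scaler_sumr -big_split /=; apply: eq_bigr => j _.
by rewrite !mxE scalerDl scalerA.
Qed.

HB.instance Definition _ d1 d2 s1 s2 :=
  GRing.isLinear.Build F 'M[F]_(d1, d2) 'M[F]_(m, n) _
  (@tmap d1 d2 s1 s2) (@tmap_is_linear d1 d2 s1 s2).

Lemma tmap_inj (C1 : {vspace 'rV[F]_m}) (C2 : {vspace 'rV[F]_n}) (X : 'M[F]_(\dim C1, \dim C2)) :
  tmap (vbasis C1) (vbasis C2) X = 0 -> X = 0.
Proof.
move=> H0.
have f1 := basis_free (vbasisP C1); have f2 := basis_free (vbasisP C2).
pose w i c := \sum_(j < \dim C2) X i j * (vbasis C2)`_j 0 c.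
have w0 : forall i c, w i c = 0.
  move=> i c; move/freeP: f1 => /(_ (fun i => w i c)); apply => //.
  apply/matrixP => z r; rewrite (ord1 z) summxE mxE.
  transitivity (tmap (vbasis C1) (vbasis C2) X r c); last by rewrite H0 mxE.
  rewrite /tmap summxE; apply: eq_bigr => i' _; rewrite summxE mxE /w mulr_suml; apply: eq_bigr => j _.
  rewrite !mxE big_ord1 !mxE; ring.
apply/matrixP => i j; rewrite mxE.
move/freeP: f2 => /(_ (fun j => X i j)); apply => //.
apply/matrixP => z c; rewrite (ord1 z) summxE mxE.
transitivity (w i c); last exact: w0.
by apply: eq_bigr => j' _; rewrite !mxE.
Qed.

Lemma tensor_dim_ge (C1 : {vspace 'rV[F]_m}) (C2 : {vspace 'rV[F]_n}) :
  (\dim C1 * \dim C2 <= \dim (tensor_code C1 C2))%N.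
Proof.
pose f : 'Hom('M[F]_(\dim C1, \dim C2), 'M[F]_(m, n)) :=
  linfun (@tmap _ _ (vbasis C1) (vbasis C2)).
have -> : (\dim C1 * \dim C2)%N = \dim (f @: fullv)%VS.
  rewrite limg_dim_eq ?dimvf //.
  apply/eqP; rewrite -subv0; apply/subvP => X; rewrite memv_cap memv_ker memv0 lfunE.
  by case/andP => _ /eqP /tmap_inj ->.
apply: dimvS; apply/subvP => Y /memv_imgP [X _ ->]; rewrite lfunE.
apply: rpred_sum => i _; apply: rpred_sum => j _; apply: memvZ.
by apply: tensor_mem; apply: vbasis_mem; apply: mem_nth; rewrite size_tuple.
Qed.
End Aux.

Lemma tensor_corrects (F : finFieldType) m n (E : {set 'I_m * 'I_n})
  (C0 : {vspace 'M[F]_(m, n)}) Ccol Crow (Hg0 : 'M[F]_(0, m * n)) :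
  (forall X : 'M[F]_(m, n),
     (X \in C0) = (X \in tensor_code Ccol Crow) && (Hg0 *m (mxvec X)^T == 0)) ->
  corrects C0 E -> corrects (tensor_code Ccol Crow) E.
Proof.
move=> HC /correctsP cC; apply/correctsP => Z ZT Zv; apply: cC => //.
by rewrite HC ZT flatmx0 eqxx.
Qed.

Lemma corr_ext m n a b h (E S : {set 'I_m * 'I_n}) (d : 'I_m * 'I_n) :
  correctable a b 0 E -> (#|S| <= h)%N -> correctable a b h (E :|: S).
Proof.
move=> [F0 [C0 [[Ccol [Crow [Hg0 [dc dr HC0]]]] cC0]]] Sh.
have cT := tensor_corrects HC0 cC0.
pose Hg : 'M[F0]_(h, m * n) := \matrix_(r, c)
  ((r < #|S|)%N && (c == mxvec_index (nth d (enum S) r).1 (nth d (enum S) r).2))%:R.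
pose g : 'Hom('M[F0]_(m, n), 'M[F0]_(h, 1)) := linfun (mulmx Hg \o trmx \o mxvec).
exists F0, (tensor_code Ccol Crow :&: lker g)%VS; split.
  exists Ccol, Crow, Hg; split => // X.
  by rewrite memv_cap memv_ker lfunE.
apply/correctsP => Z; rewrite memv_cap memv_ker lfunE /= => /andP [ZT /eqP Zg] Zv.
move/correctsP: cT; apply => // i j ijE.
case ijS : ((i, j) \in S); last by apply: Zv; rewrite inE negb_or ijE ijS.
have ltr : (index (i, j) (enum S) < h)%N.
  by apply: leq_trans Sh; rewrite cardE index_mem mem_enum.
have := congr1 (fun M : 'M_(h, 1) => M (Ordinal ltr) 0) Zg.
rewrite !mxE /= => <-.
have ltS : (index (i, j) (enum S) < #|S|)%N by rewrite cardE index_mem mem_enum.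
rewrite (bigD1 (mxvec_index i j)) //= big1 ?addr0.
  by rewrite !mxE ltS nth_index ?mem_enum //= eqxx mul1r mxvecE.
move=> c cne; rewrite !mxE ltS nth_index ?mem_enum //=.
by rewrite (negbTE cne) mul0r.
Qed.

Lemma limg_le (K : fieldType) (aT rT : vectType K) (f : 'Hom(aT, rT)) (U : {vspace aT}) :
  (\dim (f @: U) <= \dim U)%N.
Proof. by rewrite -(limg_ker_dim f U) leq_addl. Qed.

Lemma max_cardE m n a b (E : {set 'I_m * 'I_n}) (F0 : finFieldType)
  (Ccol : {vspace 'rV[F0]_m}) (Crow : {vspace 'rV[F0]_n}) :
  (m - a <= \dim Ccol)%N -> (n - b <= \dim Crow)%N ->
  corrects (tensor_code Ccol Crow) E -> max_correctable a b 0 E ->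
  (#|~: E| <= \dim (tensor_code Ccol Crow))%N.
Proof.
move=> dc dr cT [_ mx].
set T := tensor_code Ccol Crow.
rewrite leqNgt; apply/negP => ltT.
set W := (maskL F0 (~: E) @: T)%VS.
have [p /andP [pE pW] | allW] :=
  pickP [pred p | (p \in ~: E) && (delta_mx p.1 p.2 \notin W)]; last first.
  have sub : (DA F0 (~: E) <= W)%VS.
    apply/span_subvP => x /mapP [p pE ->].
    by move: (allW p) => /=; rewrite -mem_enum pE /= => /negbFE.
  have := dim_full_split F0 E.
  have := dimvS sub; have := limg_le (maskL F0 (~: E)) T; rewrite -/W.
  have := cardsC E; rewrite -cardsT card_all => h1 h2 h3 h4.
  have : (m * n < m * n)%N.
    apply: (leq_ltn_trans h4); rewrite -h1 addnC ltn_add2l.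
    exact: leq_ltn_trans h3 (leq_ltn_trans h2 ltT).
  by rewrite ltnn.
apply: (mx (E :|: [set p])).
  rewrite properEneq subsetUl andbT; apply/eqP => EE.
  by move: pE; rewrite inE EE inE set11 orbT.
exists F0, T; split.
  exists Ccol, Crow, (0 : 'M[F0]_(0, m * n)); split => // X.
  by rewrite flatmx0 eqxx andbT.
apply/correctsP => Z ZT Zv; move/correctsP: cT; apply => // i j ijE.
case: (eqVneq (i, j) p) => [ep|nep]; last first.
  by apply: Zv; rewrite inE negb_or ijE inE nep.
apply/eqP; apply: contraR pW => Zp.
have -> : delta_mx p.1 p.2 = (Z i j)^-1 *: maskL F0 (~: E) Z.
  rewrite maskLE; apply/matrixP => i' j'; rewrite /Defs.mask !mxE inE -ep /=.
  case: (eqVneq (i', j') (i, j)) => [[-> ->]|ne].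
    by rewrite ijE !eqxx mulVf.
  have -> : (i' == i) && (j' == j) = false.
    by apply/negbTE; apply: contra ne => /andP[/eqP-> /eqP->].
  case: ifP => iE; last by rewrite mulr0.
  by rewrite (Zv i' j') ?mulr0 // inE negb_or iE inE -ep ne.
by apply: memvZ; apply: memv_img.
Qed.

Lemma subset_card (T : finType) (A : {set T}) k :
  (k <= #|A|)%N -> exists2 S : {set T}, S \subset A & #|S| = k.
Proof.
move=> kA; exists [set x in take k (enum A)].
  by apply/subsetP => x; rewrite inE => /mem_take; rewrite mem_enum.
rewrite cardsE; move/card_uniqP: (take_uniq k (enum_uniq (mem A))) => ->.
rewrite size_take; case: ifP => // /negbT; rewrite -leqNgt -cardE => H.
by apply/eqP; rewrite eqn_leq H kA.
Qed.

Lemma free_take_dim (K : fieldType) (vT : vectType K) (U : {vspace vT}) k :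
  (k <= \dim U)%N -> \dim <<take k (vbasis U)>> = k.
Proof.
move=> kU.
have fr : free (take k (vbasis U)).
  apply: (@catl_free _ _ (drop k (vbasis U))); rewrite cat_take_drop.
  exact: basis_free (vbasisP U).
move/eqP: fr => ->; rewrite size_take size_tuple; case: ifP => // /negbT; rewrite -leqNgt => H.
by apply/eqP; rewrite eqn_leq H kU.
Qed.

Section Main.
Variables (F : finFieldType) (m n : nat).
Implicit Types (X Y Z : 'M[F]_(m, n)) (A E S : {set 'I_m * 'I_n}).

Lemma wt_le X A : (forall i j, X i j != 0 -> (i, j) \in A) -> (wt X <= #|A|)%N.
Proof.
move=> H; apply: subset_leq_card; apply/subsetP => [[i j]]; rewrite inE /=.
exact: H.
Qed.

Lemma mask0_vanish A Y : Defs.mask A Y = 0 -> forall i j, (i, j) \in A -> Y i j = 0.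
Proof.
move=> H i j ij; have := congr1 (fun M : 'M_(m, n) => M i j) H.
by rewrite /Defs.mask !mxE ij.
Qed.

Lemma restr_vanish A C Y : Y \in restr_code A C -> forall i j, (i, j) \notin A -> Y i j = 0.
Proof.
rewrite restrE => /memv_imgP [X _ ->] i j ij.
by rewrite maskLE /Defs.mask mxE (negbTE ij).
Qed.

Lemma restr_mem A C Y : Y \in restr_code A C -> exists2 X, X \in C & Y = Defs.mask A X.
Proof. by rewrite restrE => /memv_imgP [X XC ->]; exists X; rewrite ?maskLE. Qed.
End Main.
Local Close Scope ring_scope.

Theorem corollary1 (m n a b h : nat) :
  a < m -> b < n -> h <= (m - a) * (n - b) - maxn (m - a) (n - b) ->
  forall E' : {set 'I_m * 'I_n}, max_correctable a b 0 E' ->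
  forall (F : finFieldType) (C : {vspace 'M[F]_(m, n)}) (k : nat),
    \dim C = k -> is_MR a b h C ->
    let D := restr_code (~: E') C in
    [/\ \dim D = k, min_dist D h.+1 & h.+1 = (m * n - #|E'|) - k + 1].
Proof.
move=> am bn hle E' maxE F C k dimC MR D.
have m0 : 0 < m by lia.
have n0 : 0 < n by lia.
pose d := (Ordinal m0, Ordinal n0).
have corrE : forall S : {set 'I_m * 'I_n}, #|S| <= h -> corrects C (E' :|: S).
  by move=> S Sh; apply: MR.2; exact: corr_ext d maxE.1 Sh.
have cE : corrects C E' by have := corrE set0; rewrite setU0 cards0; apply.
have wtD : forall Y, Y \in D -> Y != 0%R -> h.+1 <= wt Y.
  move=> Y YD Y0; rewrite ltnNge; apply/negP => wY.
  have [X XC eY] := restr_mem YD.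
  pose S := [set p : 'I_m * 'I_n | Y p.1 p.2 != 0%R].
  have cS := corrE S wY.
  move/correctsP: cS => /(_ X XC) X0.
  have X0' : X = 0%R.
    apply: X0 => i j; rewrite !inE negb_or => /andP [iE /negPn /eqP Yij].
    by move: Yij; rewrite eY /Defs.mask mxE inE iE.
  by move: Y0; rewrite eY X0' -maskLE linear0 eqxx.
have dimD : \dim D = k.
  rewrite /D restrE limg_dim_eq // ; apply/eqP; rewrite -subv0; apply/subvP => X.
  rewrite memv_cap memv_ker memv0 maskLE => /andP [XC /eqP Xm].
  move/correctsP: cE => /(_ X XC) -> //.
  by move=> i j ij; apply: (mask0_vanish Xm); rewrite inE.
have [[F0 [C0 [[Ccol0 [Crow0 [Hg0 [dc0 dr0 HC0]]]] cC0]]] _] := maxE.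
have cT0 := tensor_corrects HC0 cC0.
set Cc := <<take (m - a) (vbasis Ccol0)>>%VS.
set Cr := <<take (n - b) (vbasis Crow0)>>%VS.
have dCc : \dim Cc = (m - a)%N := free_take_dim dc0.
have dCr : \dim Cr = (n - b)%N := free_take_dim dr0.
have sub : (tensor_code Cc Cr <= tensor_code Ccol0 Crow0)%VS.
  by apply: tensor_sub; apply/span_subvP => x /mem_take; apply: vbasis_mem.
have cT1 : corrects (tensor_code Cc Cr) E'.
  move/correctsP: cT0 => H; apply/correctsP => Z ZT; apply: H; exact: (subvP sub).
have N1 : #|~: E'| <= \dim (tensor_code Cc Cr).
  by apply: (max_cardE (a := a) (b := b)) => //; rewrite ?dCc ?dCr.
have N3 := tensor_dim_ge Cc Cr; rewrite dCc dCr in N3.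
have N4 : \dim (tensor_code Cc Cr) <= #|~: E'|.
  rewrite -(limg_dim_eq (f := maskL F0 (~: E'))).
    apply: leq_trans (dim_DA F0 (~: E')); apply: dimvS; apply/subvP => Y.
    by case/memv_imgP => X _ ->; rewrite maskLE mask_in_DA.
  apply/eqP; rewrite -subv0; apply/subvP => X.
  rewrite memv_cap memv_ker memv0 maskLE => /andP [XC /eqP Xm].
  move/correctsP: cT1 => /(_ X XC) -> //.
  by move=> i j ij; apply: (mask0_vanish Xm); rewrite inE.
have [[Ccol [Crow [Hg [dc dr HC]]]] _] := MR.
pose g : 'Hom('M[F]_(m, n), 'M[F]_(h, 1)) := linfun (mulmx Hg \o trmx \o mxvec).
have CE : C = (tensor_code Ccol Crow :&: lker g)%VS.
  by apply/vspaceP => X; rewrite HC memv_cap memv_ker lfunE.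
have kge : \dim (tensor_code Ccol Crow) <= k + h.
  have := limg_ker_dim g (tensor_code Ccol Crow); rewrite -CE dimC => <-.
  rewrite leq_add2l; apply: leq_trans (dimvS (subvf _)) _; rewrite dimvf /=.
  by rewrite /dim /= muln1.
have T_ge := tensor_dim_ge Ccol Crow.
have PT : (m - a) * (n - b) <= \dim Ccol * \dim Crow by apply: leq_mul.
have N2 := tensor_dim_le Cc Cr; rewrite dCc dCr in N2.
have kN : #|~: E'| <= k + h.
  exact: leq_trans N1 (leq_trans N2 (leq_trans PT (leq_trans T_ge kge))).
set N' := #|~: E'| in N1 N4 kN *.
have mx1 : 1 <= maxn (m - a) (n - b) by rewrite leq_max; lia.
have Pmx : maxn (m - a) (n - b) <= (m - a) * (n - b).
  by rewrite geq_max leq_pmulr ?leq_pmull //; lia.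
have hN : h < N'.
  move: Pmx hle N3 N4 mx1; set P := ((m - a) * (n - b))%N; set M := maxn _ _; lia.
have [S Ssub cardS] := subset_card (ltnW hN).
set Q := ~: E' :\: S.
have cardQ : #|Q| = N' - h by rewrite /Q cardsDS // cardS.
have kle : k <= #|Q|.
  rewrite -dimD -(limg_dim_eq (f := maskL F Q)).
    apply: leq_trans (dim_DA F Q); apply: dimvS; apply/subvP => Y.
    by case/memv_imgP => X _ ->; rewrite maskLE mask_in_DA.
  apply/eqP; rewrite -subv0; apply/subvP => Y.
  rewrite memv_cap memv_ker memv0 maskLE => /andP [YD /eqP Ym].
  apply/negPn/negP => Y0; have := wtD Y YD Y0; rewrite ltnNge => /negP; apply.
  rewrite -cardS; apply: wt_le => i j Yij.
  have iE : (i, j) \in ~: E'.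
    by apply: contraR Yij => ij; apply/eqP; exact: restr_vanish YD _ _ ij.
  have iQ : (i, j) \notin Q.
    by apply: contra Yij => ij; apply/eqP; exact: mask0_vanish Ym _ _ ij.
  by move: iQ; rewrite /Q !inE; rewrite inE in iE; rewrite iE andbT negbK.
have [P1 P1sub cardP1] := subset_card hN.
set Q1 := ~: E' :\: P1.
have cardQ1 : #|Q1| = N' - h.+1 by rewrite /Q1 cardsDS // cardP1.
have eq1 : (\dim (D :&: lker (maskL F Q1))%VS + \dim (maskL F Q1 @: D)%VS)%N = \dim D.
  exact: limg_ker_dim.
have : \dim (maskL F Q1 @: D)%VS <= #|Q1|.
  apply: leq_trans (dim_DA F Q1); apply: dimvS; apply/subvP => Y.
  by case/memv_imgP => X _ ->; rewrite maskLE mask_in_DA.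
move=> le1.
have pos : 0 < \dim (D :&: lker (maskL F Q1))%VS.
  move: eq1 le1 cardQ1 kN hN dimD; clearbody N' Q1 D; clear; move=> *; lia.
set Y := vpick (D :&: lker (maskL F Q1))%VS.
have Y0 : Y != 0%R by rewrite vpick0 -dimv_eq0 -lt0n.
have : Y \in (D :&: lker (maskL F Q1))%VS := memv_pick _.
rewrite memv_cap memv_ker maskLE => /andP [YD /eqP Ym].
have wY : wt Y <= h.+1.
  rewrite -cardP1; apply: wt_le => i j Yij.
  have iE : (i, j) \in ~: E'.
    by apply: contraR Yij => ij; apply/eqP; exact: restr_vanish YD _ _ ij.
  have iQ : (i, j) \notin Q1.
    by apply: contra Yij => ij; apply/eqP; exact: mask0_vanish Ym _ _ ij.
  by move: iQ; rewrite /Q1 !inE; rewrite inE in iE; rewrite iE andbT negbK.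
split => //.
  split; last exact: wtD.
  exists Y => //; rewrite Y0 /=; apply/eqP/anti_leq; rewrite wY /=; exact: wtD.
rewrite -cardC_E -/N'; lia.
Qed.
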